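(* Let $m\geq1$ and let $S=\bigsqcup_{\mathcal{O}}\mathcal{O}^{a(\mathcal{O})}$ be a finite $F_m^0$-set, where $\mathcal{O}$ runs over isomorphism classes of strongly finite transitive $F_m^0$-sets and the multiplicities $a(\mathcal{O})\in\mathbb{N}$ are almost all zero. Then the $F_m^0$-action on $S$ extends to an $F_m$-action if and only if $a(\mathcal{O})=a(z_1(\mathcal{O}))$ for every strongly finite transitive $F_m^0$-set $\mathcal{O}$.
   Context: $F_m$ is the free group on $z_1,\dots,z_m$, $\upsilon:F_m\to\mathbb{Z}$ the homomorphism with $\upsilon(z_i)=1$ for all $i$, and $F_m^0=\ker\upsilon$. For an $F_m^0$-set $S$ and $t\in\mathbb{Z}$, $z_1^t(S)$ denotes the set $S$ with the $F_m^0$-action $g\cdot s=z_1^{-t}gz_1^ts$. A finite transitive $F_m^0$-set $\mathcal{O}$ is strongly finite if $z_1^k(\mathcal{O})\cong\mathcal{O}$ for some integer $k>0$; then $z_1(\mathcal{O})$ is again strongly finite transitive. *)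

(* Defs.v *)
From HB Require Import structures.
From mathcomp Require Import all_boot all_order all_algebra.
From mathcomp Require Import boolp.
Set Implicit Arguments. Unset Strict Implicit. Unset Printing Implicit Defensive.
Import GRing.Theory Num.Theory.
Local Open Scope ring_scope.

(* Free group F_m on z_1..z_m, encoded by words in letters (i, b):
   (i, true) = z_(i+1), (i, false) = z_(i+1)^-1.  Group elements are words
   up to free reduction; actions are required to respect free reduction. *)
Definition letter (m : nat) := ('I_m * bool)%type.
Definition word (m : nat) := seq (letter m).
Definition linv {m} (x : letter m) : letter m := (x.1, ~~ x.2).

Definition ups {m} (w : word m) : int :=
  \sum_(x <- w) (if x.2 then 1 else -1).
(* membership in F_m^0 = ker upsilon *)
Definition inK {m} (w : word m) : bool := ups w == 0.

Definition is_F_action {m} {S : Type} (act : word m -> S -> S) : Prop :=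
  [/\ (forall s, act [::] s = s),
      (forall u v s, act (u ++ v) s = act u (act v s)) &
      (forall x s, act [:: x; linv x] s = s)].

(* an action of F_m^0 on S: defined on kernel words, well defined modulo
   free reduction, and multiplicative (values on non-kernel words irrelevant) *)
Definition is_F0_action {m} {S : Type} (act : word m -> S -> S) : Prop :=
  [/\ (forall s, act [::] s = s),
      (forall u v s, inK u -> inK v -> act (u ++ v) s = act u (act v s)) &
      (forall u v x s, inK (u ++ v) ->
          act (u ++ x :: linv x :: v) s = act (u ++ v) s)].

Definition z1 {n} : letter n.+1 := (ord0, true).
Definition z1pow {n} (t : int) : word n.+1 :=
  match t with
  | Posz k => nseq k z1
  | Negz k => nseq k.+1 (linv z1)
  end.

(* z_1^t(S): g . s = z_1^-t g z_1^t s *)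
Definition twist {n} {S : Type} (t : int) (act : word n.+1 -> S -> S) :=
  fun w s => act (z1pow (- t) ++ w ++ z1pow t) s.

Definition F0_iso {m} {S T : Type} (actS : word m -> S -> S)
    (actT : word m -> T -> T) : Prop :=
  exists f : S -> T, bijective f /\
    forall w s, inK w -> f (actS w s) = actT w (f s).

Definition F0_transitive {m} {S : Type} (act : word m -> S -> S) : Prop :=
  (exists s : S, True) /\
  forall s s' : S, exists w, inK w /\ act w s = s'.

Definition strongly_finite {n} {S : Type} (act : word n.+1 -> S -> S) : Prop :=
  exists k : nat, (0 < k)%N /\ F0_iso (twist (k%:Z) act) act.

Definition orb {m} {S : finType} (act : word m -> S -> S) (s : S) : {set S} :=
  [set x | `[< exists w, inK w /\ act w s = x >]].

Definition orbit_iso {m} {S O : finType} (act : word m -> S -> S)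
    (actO : word m -> O -> O) (A : {set S}) : Prop :=
  exists f : O -> S,
    [/\ injective f,
        (forall x, x \in A <-> exists o, f o = x) &
        (forall w o, inK w -> f (actO w o) = act w (f o))].

Definition mult {m} {S O : finType} (act : word m -> S -> S)
    (actO : word m -> O -> O) : nat :=
  #|[set A : {set S} | `[< (exists s, A = orb act s) /\ orbit_iso act actO A >]]|.

(* Main.v *)
Require Import Defs.
From HB Require Import structures.
From mathcomp Require Import all_boot all_order all_algebra.
From mathcomp Require Import boolp.
From mathcomp Require Import zify ring.
Set Implicit Arguments. Unset Strict Implicit. Unset Printing Implicit Defensive.
Import GRing.Theory Num.Theory.

Section Words.
Local Open Scope ring_scope.
Variable n : nat.
Local Notation word := (word n.+1).
Local Notation letter := (letter n.+1).

Lemma ups_nil : ups ([::] : word) = 0.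
Proof. by rewrite /ups big_nil. Qed.
Lemma ups_cons (x : letter) (w : word) :
  ups (x :: w) = (if x.2 then 1 else -1) + ups w.
Proof. by rewrite /ups big_cons. Qed.
Lemma ups_cat (u v : word) : ups (u ++ v) = ups u + ups v.
Proof. by rewrite /ups big_cat. Qed.
Lemma linvK (x : letter) : linv (linv x) = x.
Proof. by case: x => a b; rewrite /linv /= negbK. Qed.
Lemma ups_can (x : letter) (v : word) : ups (x :: linv x :: v) = ups v.
Proof. rewrite !ups_cons /=; case: x.2 => /=; lia. Qed.

Definition winv (p : word) : word := rev (map linv p).
Lemma winv_cons x p : winv (x :: p) = winv p ++ [:: linv x].
Proof. by rewrite /winv /= rev_cons cats1. Qed.
Lemma winv_cat p q : winv (p ++ q) = winv q ++ winv p.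
Proof. by rewrite /winv map_cat rev_cat. Qed.
Lemma winvK p : winv (winv p) = p.
Proof. by rewrite /winv map_rev revK -map_comp (eq_map linvK) map_id. Qed.
Lemma ups_winv p : ups (winv p) = - ups p.
Proof.
elim: p => [|x p IH]; first by rewrite ups_nil.
rewrite winv_cons ups_cat IH !ups_cons ups_nil /=; case: x.2 => /=; lia.
Qed.

Lemma inKE (w : word) : inK w = (ups w == 0).
Proof. by []. Qed.

Definition zpart (w : word) : word := map (fun x : letter => ((ord0 : 'I_n.+1), x.2)) w.
Lemma zpart_cat u v : zpart (u ++ v) = zpart u ++ zpart v.
Proof. by rewrite /zpart map_cat. Qed.
Lemma ups_zpart w : ups (zpart w) = ups w.
Proof. by elim: w => [|x w IH] //=; rewrite !ups_cons IH. Qed.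

Definition pure (q : word) := all (fun x : letter => x.1 == ord0) q.

Lemma ups_const (b : bool) (q : word) : all (fun y : letter => y.2 == b) q ->
  ups q = if b then (size q)%:Z else - (size q)%:Z.
Proof.
elim: q => [|y q IH] /=; first by rewrite ups_nil; case: b.
move=> /andP[/eqP hy /IH hq]; rewrite ups_cons hy hq; clear IH; case: b hy hq => /= _ _; lia.
Qed.

Lemma adj_aux (q : word) (x : letter) : pure (x :: q) ->
  (exists u y v, x :: q = u ++ y :: linv y :: v) \/ all (fun y : letter => y.2 == x.2) q.
Proof.
elim: q x => [|y q IH] x /=; first by right.
move=> /and3P[hx hy hq].
have [e|ne] := eqVneq y.2 x.2.
  have [[u [z [v E]]]|hall] := IH y (ltac:(by rewrite /= hy hq)).
    by left; exists (x :: u), z, v; rewrite E.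
  by right; rewrite -e.
left; exists [::], x, q => /=; congr (_ :: _ :: _).
case: x y hx hy ne => [a b] [c d] /= /eqP -> /eqP ->.
by rewrite /linv /=; case: b; case: d.
Qed.

Lemma adj (q : word) : pure q -> q <> [::] -> ups q = 0 ->
  exists u y v, q = u ++ y :: linv y :: v.
Proof.
case: q => [//|x q] hp _ h0.
have [//|hall] := adj_aux hp.
have : all (fun y : letter => y.2 == x.2) (x :: q) by rewrite /= eqxx.
move/ups_const; rewrite h0; case: x.2 => /=; lia.
Qed.

Lemma pure_ind (P : word -> Prop) : P [::] ->
  (forall u x v, pure (u ++ v) -> ups (u ++ v) = 0 -> P (u ++ v) ->
     P (u ++ x :: linv x :: v)) ->
  forall q, pure q -> ups q = 0 -> P q.
Proof.
move=> P0 Pst q.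
have [k] := ubnP (size q); elim: k q => [//|k IH] q hs hp h0.
have [->//|ne] := eqVneq q [::].
have [u [y [v E]]] := adj hp (ltac:(by apply/eqP)) h0.
have hp' : pure (u ++ v) by move: hp; rewrite E /pure !all_cat /= => /andP[-> /and3P[_ _ ->]].
have h0' : ups (u ++ v) = 0 by move: h0; rewrite E !ups_cat ups_can.
rewrite E; apply: Pst => //; apply: IH => //.
move: hs; rewrite E !size_cat /=; lia.
Qed.

End Words.

Section F0.
Local Open Scope ring_scope.
Variable n : nat.
Local Notation word := (word n.+1).
Local Notation letter := (letter n.+1).
Variables (T : Type) (a : word -> T -> T).
Hypothesis Ha : is_F0_action a.

Lemma a_nil s : a [::] s = s.
Proof. by case: Ha. Qed.
Lemma a_cat u v s : inK u -> inK v -> a (u ++ v) s = a u (a v s).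
Proof. by case: Ha => _ H _; apply: H. Qed.
Lemma a_can1 u x v s : inK (u ++ v) -> a (u ++ x :: linv x :: v) s = a (u ++ v) s.
Proof. by case: Ha => _ _ H; apply: H. Qed.

Lemma a_canp p u v s : inK (u ++ v) -> a (u ++ p ++ winv p ++ v) s = a (u ++ v) s.
Proof.
elim: p u v => [|x p IH] u v hK //=.
rewrite winv_cons -!catA /=.
have -> : u ++ x :: p ++ winv p ++ linv x :: v = (u ++ [:: x]) ++ p ++ winv p ++ (linv x :: v)
  by rewrite -!catA.
rewrite IH; last by move: hK; rewrite !inKE !ups_cat !ups_cons ups_nil /linv /=; case: (x.2) => /= /eqP h; apply/eqP; lia.
by rewrite -catA /= a_can1.
Qed.

Lemma a_conj_can x g s : inK g -> a (x :: linv x :: g ++ [:: x; linv x]) s = a g s.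
Proof.
move=> hg.
have := @a_can1 [::] x (g ++ [:: x; linv x]) s; rewrite /= => ->; last by
  rewrite !inKE ups_cat ups_can ups_nil addr0.
by have := @a_can1 g x [::] s; rewrite cats0 => ->.
Qed.

Lemma a_pure0_aux q : pure q -> ups q = 0 ->
  forall u v s, inK (u ++ v) -> a (u ++ q ++ v) s = a (u ++ v) s.
Proof.
move: q; apply: pure_ind => [//|p x q _ h0 IH] u v s hK.
have -> : u ++ (p ++ x :: linv x :: q) ++ v = (u ++ p) ++ x :: linv x :: (q ++ v) by rewrite -!catA.
rewrite a_can1; last by move: hK h0; rewrite !inKE !ups_cat => /eqP h1 h2; apply/eqP; lia.
have -> : (u ++ p) ++ q ++ v = u ++ (p ++ q) ++ v by rewrite -!catA.
by rewrite IH.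
Qed.

Lemma a_pure0 q u v s : pure q -> ups q = 0 -> inK (u ++ v) -> a (u ++ q ++ v) s = a (u ++ v) s.
Proof. by move=> hp h0; apply: a_pure0_aux. Qed.

Lemma a_inv u s : inK u -> a (winv u) (a u s) = s.
Proof.
move=> hu; rewrite -a_cat ?inKE ?ups_winv ?(eqP hu) ?oppr0 //.
have := @a_canp (winv u) [::] [::] s; rewrite /= winvK cats0 => ->; first exact: a_nil.
by rewrite inKE ups_nil.
Qed.

End F0.

Lemma tw1E n T (a : word n.+1 -> T -> T) w s :
  twist 1 a w s = a (linv z1 :: w ++ [:: z1]) s.
Proof. by []. Qed.

Lemma inK_conj n (x : letter n.+1) g : inK g -> inK (x :: g ++ [:: linv x]).
Proof.
rewrite !inKE => /eqP h; rewrite ups_cons ups_cat h ups_cons ups_nil /=.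
by case: x.2 => /=; apply/eqP; lia.
Qed.


Lemma a_conj_can' n T (a : word n.+1 -> T -> T) x g s : is_F0_action a -> inK g ->
  a (linv x :: x :: g ++ [:: linv x; x]) s = a g s.
Proof. by move=> Ha hg; have := a_conj_can Ha (linv x) s hg; rewrite linvK. Qed.

Lemma inK_conj' n (x : letter n.+1) g : inK g -> inK (linv x :: g ++ [:: x]).
Proof. by move=> hg; have := inK_conj (linv x) hg; rewrite linvK. Qed.

Section Iso.
Variable n : nat.
Local Notation word := (word n.+1).

Definition isoP (T1 T2 : finType) (a1 : word -> T1 -> T1) (A1 : {set T1})
  (a2 : word -> T2 -> T2) (A2 : {set T2}) (f : T1 -> T2) :=
  [/\ {in A1 &, injective f}, (forall y, y \in A2 <-> exists2 x, x \in A1 & f x = y)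
    & forall w x, inK w -> x \in A1 -> f (a1 w x) = a2 w (f x)].

Definition closed (T : finType) (a : word -> T -> T) (A : {set T}) :=
  forall w x, inK w -> x \in A -> a w x \in A.

Lemma isoP_comp (T1 T2 T3 : finType) a1 (A1 : {set T1}) a2 (A2 : {set T2}) a3 (A3 : {set T3}) f g :
  isoP a1 A1 a2 A2 f -> isoP a2 A2 a3 A3 g -> isoP a1 A1 a3 A3 (g \o f).
Proof.
case=> fi fim fe [gi gim ge].
have fA x : x \in A1 -> f x \in A2 by move=> hx; apply/fim; exists x.
split.
- move=> x y hx hy /= /(gi _ _ (fA _ hx) (fA _ hy)); exact: fi.
- move=> z; split.
  + by move/gim=> [y /fim [x hx <-] <-]; exists x.
  + by case=> x hx <-; apply/gim; exists (f x) => //; exact: fA.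
- by move=> w x hw hx /=; rewrite fe // ge //; exact: fA.
Qed.

Lemma isoP_sym (T1 T2 : finType) a1 (A1 : {set T1}) a2 (A2 : {set T2}) f (x0 : T1) :
  closed a1 A1 -> isoP a1 A1 a2 A2 f -> exists g, isoP a2 A2 a1 A1 g.
Proof.
move=> cl [fi fim fe].
have : forall y : T2, exists x : T1, y \in A2 -> x \in A1 /\ f x = y.
  move=> y; have [hy|hy] := boolP (y \in A2).
    by have [x hx e] := (fim y).1 hy; exists x.
  by exists x0.
case/fin_all_exists => g hg.
have fA x : x \in A1 -> f x \in A2 by move=> hx; apply/fim; exists x.
exists g; split.
- by move=> y y' hy hy' e; rewrite -(hg y hy).2 -(hg y' hy').2 e.
- move=> x; split.
  + move=> hx; exists (f x); first exact: fA.
    have [h1 h2] := hg _ (fA _ hx); exact: fi.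
  + by case=> y hy <-; exact: (hg y hy).1.
- move=> w y hw hy.
  have [h1 h2] := hg y hy.
  have hA : a1 w (g y) \in A1 by apply: cl.
  have hy2 : a2 w y \in A2 by rewrite -h2 -fe //; exact: fA.
  have [h3 h4] := hg _ hy2.
  by apply: fi => //; rewrite h4 fe // h2.
Qed.

Lemma isoP_tw (T1 T2 : finType) a1 (A1 : {set T1}) a2 (A2 : {set T2}) f :
  isoP a1 A1 a2 A2 f -> isoP (twist 1 a1) A1 (twist 1 a2) A2 f.
Proof.
case=> fi fim fe; split => // w x hw hx; rewrite !tw1E fe //.
exact: inK_conj'.
Qed.

Lemma isoP_untw (T1 T2 : finType) a1 (A1 : {set T1}) a2 (A2 : {set T2}) f :
  is_F0_action a1 -> is_F0_action a2 ->
  isoP (twist 1 a1) A1 (twist 1 a2) A2 f -> isoP a1 A1 a2 A2 f.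
Proof.
move=> H1 H2 [fi fim fe]; split => // w x hw hx.
have := fe (z1 :: w ++ [:: linv z1]) x (inK_conj z1 hw) hx.
by rewrite !tw1E /= -catA /= !a_conj_can'.
Qed.

Lemma isoP_id (T : finType) a (A : {set T}) : isoP a A a A id.
Proof. by split => // y; split => [h|[x hx <-]] //; exists y. Qed.

Lemma tw_closed (T : finType) a (A : {set T}) : closed a A -> closed (twist 1 a) A.
Proof. by move=> cl w x hw hx; rewrite tw1E; apply: cl => //; exact: inK_conj'. Qed.

Lemma closedT (T : finType) a : closed a [set: T].
Proof. by move=> *; rewrite in_setT. Qed.

Lemma orbit_isoE (S O : finType) (act : word -> S -> S) actO A :
  orbit_iso act actO A <-> exists f, isoP actO [set: O] act A f.
Proof.
split.
- case=> f [fi fim fe]; exists f; split.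
  + by move=> x y _ _; apply: fi.
  + move=> y; rewrite fim; split; first by case=> o <-; exists o; rewrite ?in_setT.
    by case=> o _ <-; exists o.
  + by move=> w x hw _; apply: fe.
- case=> f [fi fim fe]; exists f; split.
  + by move=> x y; apply: fi; rewrite in_setT.
  + move=> y; rewrite fim; split; first by case=> o _ <-; exists o.
    by case=> o <-; exists o; rewrite ?in_setT.
  + by move=> w x hw; apply: fe; rewrite ?in_setT.
Qed.

Section Orb.
Variables (T : finType) (a : word -> T -> T).
Hypothesis Ha : is_F0_action a.

Lemma memorb s x : x \in orb a s <-> exists w, inK w /\ a w s = x.
Proof. by rewrite inE; split => /asboolP. Qed.

Lemma orb_self s : s \in orb a s.
Proof. by apply/memorb; exists [::]; rewrite inKE ups_nil a_nil. Qed.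

Lemma orb_closed s : closed a (orb a s).
Proof.
move=> w x hw /memorb [u [hu <-]]; apply/memorb; exists (w ++ u); split.
  by move: hw hu; rewrite !inKE ups_cat => /eqP -> /eqP ->; rewrite addr0.
by rewrite a_cat.
Qed.

Lemma orb_eq s x : x \in orb a s -> orb a x = orb a s.
Proof.
move=> hx; have [u [hu ex]] := (memorb s x).1 hx.
apply/setP => y; apply/idP/idP.
  by move=> /memorb [w [hw <-]]; apply: orb_closed.
move=> /memorb [w [hw <-]]; apply/memorb; exists (w ++ winv u); split.
  by move: hw hu; rewrite !inKE ups_cat ups_winv => /eqP -> /eqP ->; rewrite oppr0 addr0.
rewrite a_cat // ?inKE ?ups_winv ?(eqP hu) ?oppr0 // -ex a_inv //.
Qed.

Lemma orb_meet s s' x : x \in orb a s -> x \in orb a s' -> orb a s = orb a s'.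
Proof. by move=> h1 h2; rewrite -(orb_eq h1) (orb_eq h2). Qed.

End Orb.
End Iso.

Lemma isoP_img n (T : finType) (a1 a2 : word n.+1 -> T -> T) (A : {set T}) tau :
  injective tau -> (forall w x, inK w -> x \in A -> tau (a1 w x) = a2 w (tau x)) ->
  isoP a1 A a2 (tau @: A) tau.
Proof.
move=> ti te; split => //.
- by move=> x y _ _; apply: ti.
- move=> y; split; first by case/imsetP=> x hx ->; exists x.
  by case=> x hx <-; apply: imset_f.
Qed.

Lemma card_le_map (T U : finType) (X : {set T}) (Y : {set U}) (f : T -> U) :
  injective f -> (forall A, A \in X -> f A \in Y) -> #|X| <= #|Y|.
Proof.
move=> fi fXY; rewrite -(card_imset X fi); apply: subset_leq_card.
by apply/subsetP => y /imsetP [x hx ->]; apply: fXY.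
Qed.

Lemma img_orb n (S : finType) (act : word n.+1 -> S -> S) (tau : S -> S) x s :
  is_F0_action act ->
  (forall g s, inK g -> tau (act g s) = act (x :: g ++ [:: linv x]) (tau s)) ->
  tau @: orb act s = orb act (tau s).
Proof.
move=> Ha te; apply/setP => y; apply/idP/idP.
  case/imsetP => z /memorb [w [hw <-]] ->; rewrite te //.
  by apply/memorb; exists (x :: w ++ [:: linv x]); split => //; apply: inK_conj.
move=> /memorb [w [hw <-]].
have hw' := inK_conj' x hw.
have -> : act w (tau s) = tau (act (linv x :: w ++ [:: x]) s).
  by rewrite te //= -catA /= a_conj_can.
by apply: imset_f; apply/memorb; exists (linv x :: w ++ [:: x]).
Qed.

Section Dir1.
Variable n : nat.
Local Notation word := (word n.+1).
Variables (S : finType) (act : word -> S -> S) (actF : word -> S -> S).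
Hypothesis Hact : is_F0_action act.
Hypothesis HF : is_F_action actF.
Hypothesis Hagree : forall w s, inK w -> actF w s = act w s.

Lemma F_cat u v s : actF (u ++ v) s = actF u (actF v s).
Proof. by case: HF => _ H _; apply: H. Qed.
Lemma F_can x s : actF [:: linv x] (actF [:: x] s) = s.
Proof. by case: HF => _ H1 H2; rewrite -F_cat /= -{2}(linvK x) H2. Qed.

Lemma F_conj x g s : inK g -> actF [:: x] (act g s) = act (x :: g ++ [:: linv x]) (actF [:: x] s).
Proof.
move=> hg; rewrite -(Hagree _ (inK_conj x hg)) -(Hagree _ hg) -!F_cat.
have -> : (x :: g ++ [:: linv x]) ++ [:: x] = [:: x] ++ (g ++ [:: linv x; x]) by rewrite /= -catA.
rewrite !F_cat.
have -> : [:: linv x; x] = [:: linv x] ++ [:: x] by [].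
by rewrite F_cat F_can.
Qed.

Lemma F_inj x : injective (actF [:: x]).
Proof. exact: can_inj (F_can x). Qed.

Definition Mset (O : finType) (actO : word -> O -> O) : {set {set S}} :=
  [set A | `[< (exists s, A = orb act s) /\ orbit_iso act actO A >]].

Lemma MsetP (O : finType) (actO : word -> O -> O) A : A \in Mset actO <-> (exists s, A = orb act s) /\ orbit_iso act actO A.
Proof. by rewrite inE; split => /asboolP. Qed.

Lemma dir1 (O : finType) (actO : word -> O -> O) : is_F0_action actO ->
  mult act actO = mult act (twist 1 actO).
Proof.
move=> HO; rewrite /mult -!/(Mset _); apply/eqP; rewrite eqn_leq; apply/andP; split.
- apply: (@card_le_map _ _ (Mset actO) (Mset (twist 1 actO)) (fun A => actF [:: z1] @: A)); first exact/imset_inj/F_inj.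
  move=> A /MsetP [[s ->] /orbit_isoE [f hf]]; apply/MsetP; split.
    by exists (actF [:: z1] s); apply: img_orb => //; apply: F_conj.
  apply/orbit_isoE; exists (actF [:: z1] \o f); apply: isoP_comp (isoP_tw hf) _.
  apply: isoP_img; first exact: F_inj.
  by move=> w x hw _; rewrite tw1E F_conj /= -?catA /= ?a_conj_can //; exact: inK_conj'.
- apply: (@card_le_map _ _ (Mset (twist 1 actO)) (Mset actO) (fun A => actF [:: linv z1] @: A)); first exact/imset_inj/F_inj.
  move=> A /MsetP [[s ->] /orbit_isoE [f hf]]; apply/MsetP; split.
    by exists (actF [:: linv z1] s); apply: img_orb => //; apply: F_conj.
  apply/orbit_isoE; exists (actF [:: linv z1] \o f); apply: (isoP_untw HO Hact).
  apply: isoP_comp hf _.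
  apply: isoP_img; first exact: F_inj.
  by move=> w x hw _; rewrite tw1E F_conj.
Qed.

End Dir1.

Section Dir2.
Local Open Scope ring_scope.
Variable n : nat.
Local Notation word := (word n.+1).
Local Notation letter := (letter n.+1).
Variables (S : finType) (act : word -> S -> S).
Hypothesis Hact : is_F0_action act.
Hypothesis Hdecomp : forall s : S, exists (O : finType) (actO : word -> O -> O),
      [/\ is_F0_action actO, F0_transitive actO, strongly_finite actO &
          orbit_iso act actO (orb act s)].
Hypothesis H : forall (O : finType) (actO : word -> O -> O),
      is_F0_action actO -> F0_transitive actO -> strongly_finite actO ->
      mult act actO = mult act (twist 1 actO).

Definition orbitP (A : {set S}) := exists s, A = orb act s.

Definition Cl (A : {set S}) : {set {set S}} :=
  [set B | `[< orbitP B /\ exists f, isoP act A act B f >]].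
Definition Tg (A : {set S}) : {set {set S}} :=
  [set B | `[< orbitP B /\ exists f, isoP (twist 1 act) A act B f >]].

Lemma ClP A B : B \in Cl A <-> orbitP B /\ exists f, isoP act A act B f.
Proof. by rewrite inE; split => /asboolP. Qed.
Lemma TgP A B : B \in Tg A <-> orbitP B /\ exists f, isoP (twist 1 act) A act B f.
Proof. by rewrite inE; split => /asboolP. Qed.

Lemma card_ClTg s : #|Cl (orb act s)| = #|Tg (orb act s)|.
Proof.
have [O [aO [HO Htr Hsf Hi]]] := Hdecomp s.
have := H HO Htr Hsf; rewrite /mult -!/(Mset _ _).
have [i hi] := (orbit_isoE _ _ _).1 Hi.
have [_ him _] := hi.
have [o0 _ _] := (him s).1 (orb_self Hact s).
have [g hg] := isoP_sym o0 (@closedT _ _ aO) hi.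
have -> : Mset act aO = Cl (orb act s).
  apply/setP => B; rewrite !inE; apply/asbool_equiv_eq; split => -[hB hiso]; split => //.
    by have [k hk] := (orbit_isoE _ _ _).1 hiso; exists (k \o g); apply: isoP_comp hg hk.
  by case: hiso => k hk; apply/orbit_isoE; exists (k \o i); apply: isoP_comp hi hk.
have -> : Mset act (twist 1 aO) = Tg (orb act s).
  apply/setP => B; rewrite !inE; apply/asbool_equiv_eq; split => -[hB hiso]; split => //.
    by have [k hk] := (orbit_isoE _ _ _).1 hiso; exists (k \o g); apply: isoP_comp (isoP_tw hg) hk.
  by case: hiso => k hk; apply/orbit_isoE; exists (k \o i); apply: isoP_comp (isoP_tw hi) hk.
by [].
Qed.

Lemma Cl_self A : orbitP A -> A \in Cl A.
Proof. by move=> hA; apply/ClP; split => //; exists id; apply: isoP_id. Qed.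

Lemma Cl_same A B : orbitP A -> B \in Cl A -> Cl B = Cl A /\ Tg B = Tg A.
Proof.
move=> [s hA] /ClP [[s' hB] [f hf]].
have [g hg] : exists g, isoP act B act A g.
  by apply: (isoP_sym s) hf; rewrite hA; apply: orb_closed.
split; apply/setP => C.
  apply/idP/idP => /ClP [hC [k hk]]; apply/ClP; split => //.
    by exists (k \o f); apply: isoP_comp hf hk.
  by exists (k \o g); apply: isoP_comp hg hk.
apply/idP/idP => /TgP [hC [k hk]]; apply/TgP; split => //.
  by exists (k \o f); apply: isoP_comp (isoP_tw hf) hk.
by exists (k \o g); apply: isoP_comp (isoP_tw hg) hk.
Qed.

Lemma Tg_inj A A' C : orbitP A' -> C \in Tg A -> C \in Tg A' -> A' \in Cl A.
Proof.
move=> [s' hA'] /TgP [_ [f hf]] /TgP [_ [f' hf']].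
have [g hg] : exists g, isoP act C (twist 1 act) A' g.
  by apply: (isoP_sym s') hf'; rewrite hA'; apply/tw_closed/orb_closed.
apply/ClP; split; first by exists s'.
exists (g \o f); apply: isoP_untw Hact Hact _.
exact: isoP_comp hf hg.
Qed.

Definition phi (A : {set S}) : {set S} :=
  nth A (enum (Tg A)) (index A (enum (Cl A))).

Lemma idx_lt A : orbitP A -> (index A (enum (Cl A)) < size (enum (Tg A)))%N.
Proof.
move=> hA; rewrite -cardE; have [s ->] := hA; rewrite -card_ClTg cardE index_mem mem_enum.
by apply: Cl_self; exists s.
Qed.

Lemma phiP A : orbitP A -> phi A \in Tg A.
Proof. by move=> hA; rewrite -mem_enum /phi mem_nth // idx_lt. Qed.

Lemma phi_inj A A' : orbitP A -> orbitP A' -> phi A = phi A' -> A = A'.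
Proof.
move=> hA hA' e.
have hC : A' \in Cl A by apply: (Tg_inj hA' (phiP hA)); rewrite e phiP.
have [eC eT] := Cl_same hA hC.
have l1 := idx_lt hA; have l2 := idx_lt hA'.
rewrite eT eC in l2.
move: e; rewrite /phi eT eC (set_nth_default A' A) // => /eqP.
rewrite nth_uniq ?enum_uniq // => /eqP ei.
have hm : A \in enum (Cl A) by rewrite mem_enum; apply: Cl_self.
have hm' : A' \in enum (Cl A) by rewrite mem_enum.
by rewrite -(nth_index A hm) ei nth_index.
Qed.

Lemma F_ex : exists F : {set S} -> S -> S, forall A, orbitP A ->
  isoP (twist 1 act) A act (phi A) (F A).
Proof.
have : forall A : {set S}, exists f : S -> S, orbitP A -> isoP (twist 1 act) A act (phi A) f.
  move=> A; have [hA|hA] := pselect (orbitP A); last by exists id.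
  by have /TgP [_ [f hf]] := phiP hA; exists f.
by case/fin_all_exists => F hF; exists F.
Qed.

Variable F : {set S} -> S -> S.
Hypothesis HF : forall A, orbitP A -> isoP (twist 1 act) A act (phi A) (F A).

Definition sig (x : S) := F (orb act x) x.

Lemma orbP x : orbitP (orb act x). Proof. by exists x. Qed.

Lemma sig_conj g x : inK g -> sig (act g x) = act (z1 :: g ++ [:: linv z1]) (sig x).
Proof.
move=> hg; rewrite /sig.
have hx : act g x \in orb act x by apply/memorb; exists g.
rewrite (orb_eq Hact hx).
have [_ _ fe] := HF (orbP x).
rewrite -fe ?orb_self //; last exact: inK_conj.
by rewrite tw1E /= -catA /= a_conj_can'.
Qed.

Lemma sig_in x : sig x \in phi (orb act x).
Proof. by have [_ fim _] := HF (orbP x); apply/fim; exists x; rewrite ?orb_self. Qed.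

Lemma sig_inj : injective sig.
Proof.
move=> x y e.
have hx := sig_in x; have hy := sig_in y.
have /TgP [[t ht] _] := phiP (orbP x).
have /TgP [[t' ht'] _] := phiP (orbP y).
have ep : phi (orb act x) = phi (orb act y).
  by rewrite ht ht'; apply: (orb_meet Hact (x := sig x)); rewrite -?ht // e -ht'.
have eo := phi_inj (orbP x) (orbP y) ep.
have [fi _ _] := HF (orbP x).
move: e; rewrite /sig -eo; apply: fi; first exact: orb_self.
by rewrite eo orb_self.
Qed.

End Dir2.

Section Build.
Local Open Scope ring_scope.
Variable n : nat.
Local Notation word := (word n.+1).
Local Notation letter := (letter n.+1).
Variables (S : Type) (act : word -> S -> S).
Hypothesis Hact : is_F0_action act.
Variables (sig sigi : S -> S).
Hypothesis h1 : cancel sig sigi.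
Hypothesis h2 : cancel sigi sig.
Hypothesis sconj : forall g x, inK g -> sig (act g x) = act (z1 :: g ++ [:: linv z1]) (sig x).

Definition tau (b : bool) := if b then sig else sigi.

Lemma tau_conj b g x : inK g ->
  tau b (act g x) = act ((ord0, b) :: g ++ [:: linv (ord0, b)]) (tau b x).
Proof.
move=> hg; case: b => /=; first exact: sconj.
apply: (can_inj h1); rewrite h2 sconj; last exact: (inK_conj' z1 hg).
by rewrite h2 /= -catA /= a_conj_can.
Qed.

Lemma tau_inv b x : tau b (tau (~~ b) x) = x.
Proof. by case: b => /=. Qed.

Fixpoint spw (w : word) (x : S) : S :=
  match w with [::] => x | y :: w' => tau y.2 (spw w' x) end.

Lemma spw_cat u v x : spw (u ++ v) x = spw u (spw v x).
Proof. by elim: u => //= y u ->. Qed.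

Lemma spw_zpart w x : spw (zpart w) x = spw w x.
Proof. by elim: w => //= y w ->. Qed.

Lemma spw_conj w g x : inK g ->
  spw w (act g x) = act (zpart w ++ g ++ winv (zpart w)) (spw w x).
Proof.
move=> hg; elim: w => [|y w IH] /=; first by rewrite cats0.
rewrite IH tau_conj; last first.
  by move: hg; rewrite !inKE !ups_cat ups_winv => /eqP ->; rewrite add0r addrN.
by rewrite winv_cons /= -!catA.
Qed.

Lemma spw_pure0 (q : word) : pure q -> ups q = 0 -> forall x, spw q x = x.
Proof.
move: q; apply: pure_ind => // u y v _ _ IH x.
by rewrite spw_cat /= tau_inv -spw_cat IH.
Qed.

Lemma pure_zpart (w : word) : pure (zpart w).
Proof. by elim: w. Qed.

Lemma pure_winv (p : word) : pure p -> pure (winv p).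
Proof. by rewrite /pure /winv all_rev all_map. Qed.

Definition actF (w : word) (x : S) := act (w ++ winv (zpart w)) (spw w x).

Lemma inK_wz (w : word) : inK (w ++ winv (zpart w)).
Proof. by rewrite inKE ups_cat ups_winv ups_zpart addrN. Qed.

Lemma actF_agree w x : inK w -> actF w x = act w x.
Proof.
move=> hw; have h0 : ups w = 0 by apply/eqP.
rewrite /actF -spw_zpart spw_pure0 ?pure_zpart ?ups_zpart //.
have := @a_pure0 _ _ act Hact (winv (zpart w)) w [::] x.
rewrite !cats0 => -> //; first exact/pure_winv/pure_zpart.
by rewrite ups_winv ups_zpart h0 oppr0.
Qed.

Lemma actF_F : is_F_action actF.
Proof.
split.
- by move=> x; rewrite /actF /= a_nil.
- move=> u v x; rewrite /actF spw_conj; last exact: inK_wz.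
  rewrite -(a_cat Hact); first last.
  + by rewrite inKE !ups_cat !ups_winv !ups_zpart; apply/eqP; lia.
  + exact: inK_wz.
  rewrite spw_cat zpart_cat winv_cat.
  have -> : (u ++ winv (zpart u)) ++ zpart u ++ (v ++ winv (zpart v)) ++ winv (zpart u) =
    u ++ winv (zpart u) ++ winv (winv (zpart u)) ++ (v ++ winv (zpart v) ++ winv (zpart u))
    by rewrite winvK -!catA.
  rewrite (a_canp Hact) //; first by rewrite -!catA.
  by rewrite inKE !ups_cat !ups_winv !ups_zpart; apply/eqP; lia.
- move=> y x; rewrite /actF /= tau_inv.
  set z : letter := (ord0, y.2).
  have -> : winv (zpart [:: y; linv y]) = [:: z; linv z].
    by rewrite /winv /zpart /linv /z /= negbK.
  have := @a_can1 _ _ act Hact [::] y [:: z; linv z] x; rewrite /= => ->.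
    have := @a_can1 _ _ act Hact [::] z [::] x; rewrite /= => ->.
      exact: a_nil.
    by rewrite inKE ups_nil.
  by rewrite inKE ups_can ups_nil.
Qed.

End Build.

Unset Implicit Arguments.

Theorem lemma5p6 (n : nat) (S : finType) (act : word n.+1 -> S -> S)
  (Hact : is_F0_action act)
  (Hdecomp : forall s : S, exists (O : finType) (actO : word n.+1 -> O -> O),
      [/\ is_F0_action actO, F0_transitive actO, strongly_finite actO &
          orbit_iso act actO (orb act s)]) :
  (exists actF : word n.+1 -> S -> S, is_F_action actF /\
      forall w s, inK w -> actF w s = act w s)
  <->
  (forall (O : finType) (actO : word n.+1 -> O -> O),
      is_F0_action actO -> F0_transitive actO -> strongly_finite actO ->
      mult act actO = mult act (twist 1 actO)).
Proof.
split.
- case=> actF [HF Hag] O actO HO _ _.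
  exact: (dir1 Hact HF Hag HO).
- move=> H.
  have [F HF] := F_ex Hact Hdecomp H.
  have hinj := sig_inj Hact Hdecomp H HF.
  have [si c1 c2] := injF_bij hinj.
  exists (actF act (sig act F) si); split.
  + apply: (actF_F Hact c1 c2).
    by move=> g x hg; apply: (sig_conj Hact HF).
  + move=> w s hw; exact: (actF_agree Hact c1 c2).
Qed.
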